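(* For any integers $k, m \ge 1$: if both $k$ and $m$ are even, then \[ 2O(k,m) = B(k,m) + B\!\left(\tfrac{k}{2}, \tfrac{m-2}{2}\right) - B\!\left(\tfrac{k}{2}, \tfrac{m}{2}\right) - B\!\left(\tfrac{k-2}{2}, \tfrac{m-2}{2}\right); \] otherwise, \[ 2O(k,m) = B(k,m) - 2B\!\left(\left\lfloor \tfrac{k}{2}\right\rfloor, \left\lfloor \tfrac{m-1}{2}\right\rfloor\right). \]
   Context: For $k \ge 1$, $m \ge 0$, $\mathcal{B}(k,m)$ is the set of binary words of length $m$ that avoid (do not contain as a not-necessarily-contiguous subsequence) every word $0^j1^{k-j}$, $j\in\{0,\dots,k\}$, and $B(k,m) = |\mathcal{B}(k,m)|$; also $B(0,m) = 0$ for all $m \ge 0$ (so $B(k,0)=1$ for $k\ge1$). For a binary word $w=w_1\cdots w_n$, $G(w)$ is the permutation of $[n]$ listing first the positions of zeros of $w$ in increasing order, then the positions of ones in increasing order; $w$ is odd if $G(w)$ has an odd number of inversions. $O(k,m)$ is the number of odd words in $\mathcal{B}(k,m)$. *)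

(* Defs.v *)
From mathcomp Require Import all_boot all_algebra.
Set Implicit Arguments. Unset Strict Implicit. Unset Printing Implicit Defensive.

(* Binary words of length m: m.-tuple bool, with false = 0 and true = 1. *)

Definition pat (k j : nat) : seq bool := nseq j false ++ nseq (k - j) true.

Definition avoids_all (k : nat) (w : seq bool) : bool :=
  [forall j : 'I_k.+1, ~~ subseq (pat k j) w].

Definition calB (k m : nat) : {set m.-tuple bool} :=
  [set w : m.-tuple bool | avoids_all k w].

Definition B (k m : nat) : nat := if k == 0 then 0 else #|calB k m|.

(* G(w) as the one-line notation (list of values in [n], 1-based positions):
   positions of zeros in increasing order, then positions of ones. *)
Definition Gseq (w : seq bool) : seq nat :=
  [seq i <- iota 1 (size w) | ~~ nth false w i.-1]
  ++ [seq i <- iota 1 (size w) | nth false w i.-1].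

Definition inversions (s : seq nat) : nat :=
  #|[set p : 'I_(size s) * 'I_(size s) |
      (p.1 < p.2) && (nth 0 s p.2 < nth 0 s p.1)]|.

Definition odd_word (w : seq bool) : bool := odd (inversions (Gseq w)).

Definition O (k m : nat) : nat := #|[set w in calB k m | odd_word w]|.

(* Main.v *)
Require Import Defs.
From mathcomp Require Import all_boot all_algebra zify ring.
Set Implicit Arguments. Unset Strict Implicit. Unset Printing Implicit Defensive.
Import GRing.Theory.

Fixpoint W (m : nat) : seq (seq bool) :=
  if m is m'.+1 then [seq false :: w | w <- W m'] ++ [seq true :: w | w <- W m']
  else [:: [::]].

Lemma sum_tuple (R : nmodType) m (F : seq bool -> R) :
  (\sum_(t : m.-tuple bool) F t = \sum_(w <- W m) F w)%R.
Proof.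
elim: m F => [|m IH] F.
  rewrite /= big_seq1 (big_pred1 [tuple]) // => t.
  by apply/esym/eqP; apply: val_inj; case: t => [[]].
pose h (p : bool * m.-tuple bool) : m.+1.-tuple bool := [tuple of p.1 :: p.2].
have hbij : bijective h.
  exists (fun t : m.+1.-tuple bool => (thead t, [tuple of behead t])).
    by case=> b t; congr pair; apply: val_inj.
  move=> t; apply: val_inj => /=.
  by case: t => [[|x s] //= _].
rewrite (reindex h) /=; last by apply: onW_bij.
rewrite -(pair_big xpredT xpredT (fun b t => F (b :: tval t))) /=.
rewrite big_bool /= /= big_cat !big_map /= addrC.
by rewrite (IH (fun w => F (true :: w))) (IH (fun w => F (false :: w))).
Qed.
Fixpoint lam (w : seq bool) : nat :=
  match w with
  | [::] => 0
  | b :: w' => if b then maxn (lam w') (count id w').+1 else (lam w').+1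
  end.

Lemma subseq_ones r w : subseq (nseq r true) w = (r <= count id w).
Proof.
elim: w r => [|b w IH] [|r] //=.
by case: b => /=; [rewrite IH | rewrite (IH r.+1)]; lia.
Qed.

Lemma count_le_lam w : count id w <= lam w.
Proof. elim: w => [|[] w IH] //=; lia. Qed.

Lemma subseq_cons2 (x y : bool) s w :
  subseq (x :: s) (y :: w) = subseq (if x == y then s else x :: s) w.
Proof. by []. Qed.

Lemma pat_lam w k :
  (exists j r, j + r = k /\ subseq (nseq j false ++ nseq r true) w) <-> k <= lam w.
Proof.
elim: w k => [|b w IH] k.
  split.
    by case=> [[|j] [[|r] [<-]]] //.
  by rewrite leqn0 => /eqP ->; exists 0, 0.
case: b; rewrite [lam _]/=; split.
- case=> [[|j] [r [<- H]]].
    by move: H; rewrite add0n subseq_ones /=; lia.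
  move: H; rewrite [nseq j.+1 _ ++ _]/= subseq_cons2 /= => H.
  have : j.+1 + r <= lam w by apply/IH; exists j.+1, r.
  lia.
- rewrite leq_max => /orP [/IH [j [r [Hk H]]] | H].
    exists j, r; split => //.
    case: j Hk H => [|j] Hk H.
      by move: H; rewrite !subseq_ones /=; lia.
    by rewrite [nseq j.+1 _ ++ _]/= subseq_cons2.
  by exists 0, k; split => //; rewrite subseq_ones /=; lia.
- case=> [[|j] [r [<- H]]].
    by move: H; rewrite subseq_ones /=; have := count_le_lam w; lia.
  move: H; rewrite [nseq j.+1 _ ++ _]/= subseq_cons2 /= => H.
  have : j + r <= lam w by apply/IH; exists j, r.
  lia.
- case: k => [|k] Hk; first by exists 0, 0.
  have [j [r [Hjr H]]] : exists j r, j + r = k /\ subseq (nseq j false ++ nseq r true) w.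
    by apply/IH; lia.
  exists j.+1, r; split; first by lia.
  by rewrite [nseq j.+1 _ ++ _]/= subseq_cons2.
Qed.

Lemma avoids_lam k w : avoids_all k w = (lam w < k).
Proof.
rewrite /avoids_all; apply/idP/idP.
- move/forallP => H; rewrite ltnNge; apply/negP => /pat_lam [j [r [Hk Hs]]].
  have Hj : j < k.+1 by lia.
  move: (H (Ordinal Hj)); rewrite /pat /=.
  have -> : k - j = r by lia.
  by rewrite Hs.
- move=> Hlt; apply/forallP => j; apply/negP => Hs.
  have : k <= lam w.
    apply/pat_lam; exists j, (k - j); split; last by [].
    by have := ltn_ord j; lia.
  lia.
Qed.
Fixpoint invr (s : seq nat) : nat :=
  if s is x :: s' then count (fun y => y < x) s' + invr s' else 0.

Fixpoint inv10 (w : seq bool) : nat :=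
  if w is b :: w' then (if b then count negb w' else 0) + inv10 w' else 0.

Lemma sum_nth_count (P : pred nat) s :
  \sum_(j < size s) P (nth 0 s j) = count P s.
Proof.
elim: s => [|x s IH]; first by rewrite big_ord0.
by rewrite /= big_ord_recl /= IH.
Qed.

Lemma inversionsE s :
  inversions s = \sum_(i < size s) \sum_(j < size s) ((i < j) && (nth 0 s j < nth 0 s i)).
Proof.
rewrite /inversions -sum1_card big_mkcond /=.
rewrite pair_big /=; apply: eq_bigr => p _.
by rewrite in_set; case: ifP.
Qed.

Lemma inversions_invr s : inversions s = invr s.
Proof.
rewrite inversionsE; elim: s => [|x s IH]; first by rewrite big_ord0.
rewrite /= big_ord_recl /= big_ord_recl /= add0n.
rewrite -IH; congr addn.
  by rewrite -sum_nth_count.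
apply: eq_bigr => i _.
by rewrite big_ord_recl /=.
Qed.

Definition Zs (w : seq bool) := [seq i <- iota 1 (size w) | ~~ nth false w i.-1].
Definition Os (w : seq bool) := [seq i <- iota 1 (size w) | nth false w i.-1].

Lemma iota1S n : iota 1 n.+1 = 1 :: map succn (iota 1 n).
Proof. by rewrite /= (iotaDl 1 1 n). Qed.

Lemma Zs_cons b w : Zs (b :: w) = if b then map succn (Zs w) else 1 :: map succn (Zs w).
Proof.
rewrite /Zs (_ : size (b :: w) = (size w).+1) // iota1S /= filter_map.
have -> : [seq i <- iota 1 (size w) | preim succn (fun i => ~~ nth false (b :: w) i.-1) i]
   = [seq i <- iota 1 (size w) | ~~ nth false w i.-1].
  apply: eq_in_filter => i; rewrite mem_iota => /andP [Hi _] /=.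
  by case: i Hi.
by case: b.
Qed.

Lemma Os_cons b w : Os (b :: w) = if b then 1 :: map succn (Os w) else map succn (Os w).
Proof.
rewrite /Os (_ : size (b :: w) = (size w).+1) // iota1S /= filter_map.
have -> : [seq i <- iota 1 (size w) | preim succn (fun i => nth false (b :: w) i.-1) i]
   = [seq i <- iota 1 (size w) | nth false w i.-1].
  apply: eq_in_filter => i; rewrite mem_iota => /andP [Hi _] /=.
  by case: i Hi.
by case: b.
Qed.

Lemma Zs_pos w : all (fun a => 0 < a) (Zs w).
Proof.
elim: w => [|b w IH] //; rewrite Zs_cons.
have H : all (fun a => 0 < a) (map succn (Zs w)) by rewrite all_map; apply/allP.
by case: b.
Qed.

Lemma size_Zs w : size (Zs w) = count negb w.
Proof. by elim: w => [|b w IH] //; rewrite Zs_cons; case: b => /=; rewrite size_map IH. Qed.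

Lemma invr_map s : invr (map succn s) = invr s.
Proof. by elim: s => [|x s IH] //=; rewrite IH count_map. Qed.

Lemma invr_mid A x C :
  invr (A ++ x :: C) = invr (A ++ C) + count (fun a => x < a) A + count (fun c => c < x) C.
Proof.
elim: A => [|a A IH] /=; first by lia.
rewrite IH !count_cat /=; lia.
Qed.

Lemma count_lt1_map s : count (fun y => y < 1) (map succn s) = 0.
Proof. by elim: s. Qed.

Lemma invr_Gseq w : invr (Gseq w) = inv10 w.
Proof.
elim: w => [|b w IH] //.
have -> : Gseq (b :: w) = Zs (b :: w) ++ Os (b :: w) by [].
have HG : Gseq w = Zs w ++ Os w by [].
rewrite Zs_cons Os_cons; case: b => /=.
  rewrite invr_mid -map_cat invr_map -HG IH count_map count_lt1_map.
  have -> : count (preim succn (fun a => 1 < a)) (Zs w) = size (Zs w).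
    by rewrite -count_predT; apply: eq_in_count => a /=; have := allP (Zs_pos w) a; move=> H /H.
  by rewrite size_Zs; lia.
by rewrite -map_cat count_lt1_map invr_map -HG IH.
Qed.

Lemma odd_wordE w : odd_word w = odd (inv10 w).
Proof. by rewrite /odd_word inversions_invr invr_Gseq. Qed.

Local Open Scope ring_scope.

Definition eps (sg : bool) (n : nat) : int := if sg then (-1) ^+ n else 1.

Lemma eps_add sg a b : eps sg (a + b) = eps sg a * eps sg b.
Proof. by case: sg; rewrite /eps ?exprD ?mulr1. Qed.

Definition TT sg m l o : int :=
  \sum_(w <- W m) ((lam w == l) && (count id w == o))%:R * eps sg (inv10 w).

Lemma size_W m w : w \in W m -> size w = m.
Proof.
elim: m w => [|m IH] w /=; first by rewrite inE => /eqP ->.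
by rewrite mem_cat => /orP [] /mapP [v Hv ->] /=; rewrite IH.
Qed.

Lemma count_negb_id w : count negb w = (size w - count id w)%N.
Proof. elim: w => [|[] w IH] //=; have := count_size id w; lia. Qed.

Lemma TT_rec sg m l o :
  TT sg m.+1 l o = (0 < l)%N%:R * TT sg m l.-1 o
    + (0 < o)%N%:R * eps sg (m - o.-1) *
      ((o <= l)%N%:R * TT sg m l o.-1 + (l == o)%:R * TT sg m o.-1 o.-1).
Proof.
rewrite /TT /= big_cat !big_map /=; congr (_ + _).
  rewrite mulr_sumr; apply: eq_bigr => w _.
  rewrite mulrA -natrM add0n; congr (_%:R * _).
  by case: l => [|l] /=; [|rewrite mul1n eqSS].
rewrite !mulr_sumr -big_split /= mulr_sumr.
rewrite big_seq_cond [RHS]big_seq_cond; apply: eq_bigr => w /andP [Hw _].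
rewrite (count_negb_id w) (size_W Hw).
have HL := count_le_lam w.
rewrite [X in X == o](_ : _ = (count id w).+1) //.
case: (eqVneq (count id w).+1 o) => [<- | Ho]; last first.
  rewrite andbF mul0r.
  case: o Ho => [|o] Ho; first by rewrite mul0r mul0r.
  by move: Ho; rewrite eqSS => /negbTE ->; rewrite !andbF !mul0r !mulr0 ?addr0 ?mulr0.
rewrite !succnK !eqxx /= mul1r eps_add !andbT.
have -> : (maxn (lam w) (count id w).+1 == l)%:R =
   (count id w < l)%:R * (lam w == l)%:R + (l == (count id w).+1)%:R * (lam w == count id w)%:R :> int.
  by rewrite -!natrM -natrD; congr _%:R; nia.
ring.
Qed.

Fixpoint cb (m l : nat) : nat :=
  match m with
  | 0 => (l == 0)%N
  | m'.+1 => if (m'.+1 <= l.*2)%N && (l <= m'.+1)%N then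
               ((if l is l'.+1 then cb m' l' else 0) + cb m' l)%N else 0%N
  end.

Lemma cbv m l : cb m l = 0%N \/ (m <= l.*2 /\ l <= m)%N.
Proof.
case: m => [|m] /=; first by case: l; [right|left].
by case: ifP => [/andP [H1 H2]|]; [right|left].
Qed.

Ltac bsplit := repeat match goal with
  | |- context [nat_of_bool ?b] =>
      lazymatch b with true => fail | false => fail | _ =>
      let E := fresh "E" in case E: b end
  | |- context [if ?b then _ else _] =>
      lazymatch b with true => fail | false => fail | _ =>
      let E := fresh "E" in case E: b end
  end.

Ltac addcb := repeat match goal with
  | |- context [cb ?a ?b] =>
      lazymatch goal with
      | H : cb a b = 0%N \/ _ |- _ => fail
      | _ => let H := fresh "Hc" in pose proof (cbv a b) as H
      end
  end.

Lemma TT0 sg l o : TT sg 0 l o = ((l == 0) && (o == 0))%:R.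
Proof.
rewrite /TT /= big_seq1 /= /eps; case: sg; rewrite ?expr0 mulr1.
all: by rewrite ![_ == l]eq_sym ![_ == o]eq_sym.
Qed.

Lemma TT_false m l o : TT false m l o = ((m <= l + o) && (o <= l))%N%:R * (cb m l)%:R.
Proof.
elim: m l o => [|m IH] l o.
  rewrite TT0 /=; bsplit; lia.
rewrite TT_rec !IH /eps.
case: l => [|l]; case: o => [|o]; rewrite /= ?mul0r ?add0r ?mul1r.
all: try (case: (eqVneq l o) => [->|?]).
all: addcb; bsplit; lia.
Qed.

Definition rng m l o : bool := ((m <= l + o) && (o <= l))%N.

Definition X1 n l o : int := (rng n.*2.+1 l o)%:R * (odd l)%:R * (cb n l./2)%:R.
Definition X2 n l o : int :=
  (rng n.*2.+2 l o)%:R * (if odd l then (-1) ^+ o else 1) * (cb n (l.-1)./2)%:R.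

Lemma sgnE n : (-1) ^+ n = (if odd n then -1 else 1) :> int.
Proof. by rewrite -signr_odd; case: (odd n); rewrite ?expr1 ?expr0. Qed.

Lemma nat_par l : l = 0%N \/ (exists j, l = j.*2.+1) \/ (exists j, l = j.*2.+2).
Proof.
case: l => [|l]; [by left|right].
elim: l => [|l IH]; first by left; exists 0%N.
case: IH => [[j ->]|[j ->]].
  by right; exists j.
by left; exists j.+1; rewrite doubleS.
Qed.

Lemma stepB n : (forall l o, TT true n.*2.+1 l o = X1 n l o) ->
  forall l o, TT true n.*2.+2 l o = X2 n l o.
Proof.
move=> H l o; rewrite TT_rec !H /eps /X1 /X2 /rng !sgnE.
case: (eqVneq l o) => [<-|/eqP Hlo]; rewrite ?eqxx ?mulr0 ?addr0; last move: Hlo.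
all: case: (nat_par l) => [->|[[j ->]|[j ->]]];
  rewrite /= ?doubleK ?uphalf_double ?odd_double /=.
all: try move=> Hlo.
all: addcb; bsplit; lia.
Qed.

Lemma stepA n : (forall l o, TT true n.*2.+2 l o = X2 n l o) ->
  forall l o, TT true n.*2.+3 l o = X1 n.+1 l o.
Proof.
move=> H l o; rewrite TT_rec !H /eps /X1 /X2 /rng !sgnE.
case: (eqVneq l o) => [<-|/eqP Hlo]; rewrite ?eqxx ?mulr0 ?addr0; last move: Hlo.
all: case: (nat_par l) => [->|[[j ->]|[j ->]]];
  rewrite /= ?doubleK ?uphalf_double ?odd_double /=.
all: try move=> Hlo.
all: try (revert Hlo); try (case: j => [|j]); try move=> Hlo;
  rewrite /= ?doubleS ?doubleK ?uphalf_double ?odd_double /=.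
all: addcb; bsplit; lia.
Qed.

Lemma base1 l o : TT true 1 l o = X1 0 l o.
Proof.
rewrite TT_rec !TT0 /eps /X1 /rng !sgnE.
case: l => [|[|l]]; case: o => [|[|o]]; rewrite /=; bsplit; lia.
Qed.

Lemma TT_true_closed n : (forall l o, TT true n.*2.+1 l o = X1 n l o) /\
  (forall l o, TT true n.*2.+2 l o = X2 n l o).
Proof.
elim: n => [|n [_ IH]].
  by split; [exact: base1 | apply: stepB; exact: base1].
have H1 : forall l o, TT true n.+1.*2.+1 l o = X1 n.+1 l o by exact: stepA.
by split; [|apply: stepB].
Qed.

Lemma card_sumZ m (A : {set m.-tuple bool}) (P : seq bool -> bool) :
  (forall t, (t \in A) = P t) -> (#|A|%:R : int) = \sum_(w <- W m) (P w)%:R.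
Proof.
move=> HA; rewrite -sum_tuple -sum1_card natr_sum big_mkcond /=.
by apply: eq_bigr => t _; rewrite HA; case: (P t).
Qed.

Definition Ssum sg k m : int := \sum_(w <- W m) (lam w < k)%N%:R * eps sg (inv10 w).

Lemma B_Ssum k m : (B k m)%:R = Ssum false k m.
Proof.
rewrite /B /Ssum; case: eqP => [->|_].
  by rewrite big1_seq // => w _; rewrite mul0r.
rewrite (@card_sumZ _ _ (fun w => (lam w < k)%N)) => [|t]; last by rewrite in_set avoids_lam.
by apply: eq_bigr => w _; rewrite /eps mulr1.
Qed.

Lemma O_sum k m : ((O k m)%:R : int) = \sum_(w <- W m) ((lam w < k)%N && odd (inv10 w))%:R.
Proof.
rewrite /O (@card_sumZ _ _ (fun w => (lam w < k)%N && odd (inv10 w))) // => t.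
by rewrite !in_set avoids_lam odd_wordE.
Qed.

Lemma twoO k m : (2 * (O k m)%:R : int) = Ssum false k m - Ssum true k m.
Proof.
rewrite O_sum /Ssum mulr_sumr -sumrB; apply: eq_bigr => w _.
rewrite /eps sgnE mulr1; case: (lam w < k)%N; case: (odd (inv10 w)) => /=; lia.
Qed.

Lemma sum_eq_ind n (x : nat) : \sum_(i < n) ((x == i :> nat)%:R : int) = (x < n)%N%:R.
Proof.
elim: n => [|n IH]; first by rewrite big_ord0.
rewrite big_ord_recr /= IH; case: (ltngtP x n) => H; lia.
Qed.

Lemma size_count_le m w : w \in W m -> (count id w <= m)%N.
Proof. by move=> Hw; rewrite -(size_W Hw) count_size. Qed.

Lemma Ssum_TT sg k m : Ssum sg k m = \sum_(l < k) \sum_(o < m.+1) TT sg m l o.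
Proof.
rewrite /Ssum /TT.
rewrite (eq_bigr (fun l : 'I_k => \sum_(w <- W m) \sum_(o < m.+1)
          ((lam w == l) && (count id w == o))%:R * eps sg (inv10 w))); last first.
  by move=> l _; rewrite exchange_big.
rewrite exchange_big /= big_seq_cond [RHS]big_seq_cond.
apply: eq_bigr => w /andP [Hw _].
rewrite (eq_bigr (fun l : 'I_k => (lam w == l)%:R * eps sg (inv10 w) *
            \sum_(o < m.+1) ((count id w == o)%:R : int))); last first.
  move=> l _; rewrite mulr_sumr; apply: eq_bigr => o _.
  by case: (lam w == l); case: (count id w == o); rewrite /= ?mul0r ?mulr0 ?mul1r ?mulr1.
rewrite sum_eq_ind ltnS size_count_le //.
under eq_bigr do rewrite mulr1.
by rewrite -mulr_suml sum_eq_ind.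
Qed.

Lemma sum_range N a b : \sum_(o < N) (((a <= o) && (o <= b))%N%:R : int) = (minn b.+1 N - a)%N%:R.
Proof.
elim: N => [|N IH]; first by rewrite big_ord0; lia.
rewrite big_ord_recr /= IH; bsplit; lia.
Qed.

Lemma sum_alt N a b : \sum_(o < N) (((a <= o) && (o <= b))%N%:R * (-1) ^+ o : int) =
  (-1) ^+ a * (odd (minn b.+1 N - a))%:R.
Proof.
elim: N => [|N IH]; first by rewrite big_ord0; lia.
rewrite big_ord_recr /= IH !sgnE; bsplit; lia.
Qed.

Lemma sum_evenF (F : nat -> int) j : \sum_(l < j.*2) F l = \sum_(i < j) (F i.*2 + F i.*2.+1).
Proof.
elim: j => [|j IH]; first by rewrite !big_ord0.
by rewrite doubleS !big_ord_recr /= IH addrA.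
Qed.

Lemma sum_oddF (F : nat -> int) j :
  \sum_(l < j.*2.+1) F l = \sum_(i < j) (F i.*2 + F i.*2.+1) + F j.*2.
Proof. by rewrite big_ord_recr /= sum_evenF. Qed.

Definition bt n i : int := (minn i.+1 n.+1 - (n - i))%N%:R * (cb n i)%:R.

Lemma rng_split m l o : rng m l o = ((m - l <= o) && (o <= l))%N.
Proof. by rewrite /rng leq_subLR addnC. Qed.

Lemma B_closed K n : (B K n)%:R = \sum_(0 <= i < K) bt n i.
Proof.
rewrite B_Ssum Ssum_TT big_mkord; apply: eq_bigr => l _.
under eq_bigr do rewrite TT_false.
rewrite -mulr_suml; rewrite /bt; congr (_ * _).
under eq_bigr do rewrite -/(rng n l _) rng_split.
by rewrite sum_range.
Qed.

Definition F1 n l : int := \sum_(o < n.*2.+2) X1 n l o.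
Definition F2 n l : int := \sum_(o < n.*2.+3) X2 n l o.

Lemma F1E n l : F1 n l = (minn l.+1 n.*2.+2 - (n.*2.+1 - l))%N%:R * (odd l)%:R * (cb n l./2)%:R.
Proof.
rewrite /F1 /X1 -!mulr_suml; congr (_ * _ * _).
under eq_bigr do rewrite rng_split.
by rewrite sum_range.
Qed.

Lemma F1_even n i : F1 n i.*2 = 0.
Proof. by rewrite F1E ?odd_double mulr0 mul0r. Qed.

Lemma F1_odd n i : F1 n i.*2.+1 = 2 * bt n i.
Proof.
rewrite F1E /bt /= ?uphalf_double ?odd_double /=.
addcb; bsplit; lia.
Qed.

Lemma F2E_odd n i : F2 n i.*2.+1 = - (cb n i)%:R.
Proof.
rewrite /F2 /X2 /= ?odd_double /= ?uphalf_double -!mulr_suml.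
under eq_bigr do rewrite rng_split.
rewrite sum_alt !sgnE ?doubleK; addcb; bsplit; lia.
Qed.

Lemma F2E_even n i : F2 n i.*2.+2 =
  (minn i.*2.+3 n.*2.+3 - (n.*2.+2 - i.*2.+2))%N%:R * (cb n i)%:R.
Proof.
rewrite /F2 /X2 /= ?odd_double /= ?uphalf_double ?doubleK.
under eq_bigr do rewrite mulr1.
rewrite -mulr_suml.
under eq_bigr do rewrite rng_split.
by rewrite sum_range.
Qed.

Lemma F2_0 n : F2 n 0 = 0.
Proof.
rewrite /F2 big1 // => o _; rewrite /X2 /rng /=.
have -> : ((n.*2.+2 <= 0 + o) && (o <= 0))%N = false by apply/negbTE/negP => /andP []; lia.
by rewrite !mul0r.
Qed.

Lemma F2_pair n i : F2 n i.*2.+1 + F2 n i.*2.+2 = 2 * bt n i.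
Proof. rewrite F2E_odd F2E_even /bt; addcb; bsplit; lia. Qed.

Lemma kpar k : (exists j, k = j.*2) \/ (exists j, k = j.*2.+1).
Proof.
case: (nat_par k) => [->|[[j ->]|[j ->]]].
- by left; exists 0%N.
- by right; exists j.
- by left; exists j.+1.
Qed.

Lemma S_odd_m k n : Ssum true k n.*2.+1 = 2 * (B k./2 n)%:R.
Proof.
rewrite Ssum_TT.
rewrite (eq_bigr (fun l : 'I_k => F1 n l)); last first.
  move=> l _; rewrite /F1; apply: eq_bigr => o _; by case: (TT_true_closed n) => H1 _; rewrite H1.
have G (j : nat) : \sum_(i < j) (F1 n i.*2 + F1 n i.*2.+1) = 2 * \sum_(0 <= i < j) bt n i.
  rewrite big_mkord mulr_sumr.
  by apply: eq_bigr => i _; rewrite F1_even F1_odd add0r.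
rewrite B_closed.
case: (kpar k) => [[j ->]|[j ->]].
  have E : (j.*2)./2 = j by rewrite doubleK.
  by rewrite (sum_evenF (F1 n)) G E.
have E : (j.*2.+1)./2 = j by rewrite /= uphalf_double.
by rewrite (sum_oddF (F1 n)) G F1_even addr0 E.
Qed.

Lemma S_even_m k n : Ssum true k.+1 n.*2.+2 =
  2 * (B k./2 n)%:R - (odd k)%:R * (cb n k./2)%:R.
Proof.
rewrite Ssum_TT.
rewrite (eq_bigr (fun l : 'I_k.+1 => F2 n l)); last first.
  move=> l _; rewrite /F2; apply: eq_bigr => o _; by case: (TT_true_closed n) => _ H2; rewrite H2.
rewrite big_ord_recl /= F2_0 add0r B_closed.
rewrite (eq_bigr (fun i : 'I_k => F2 n i.+1)); last by move=> i _; rewrite /bump leq0n add1n.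
have G (j : nat) : \sum_(i < j) (F2 n i.*2.+1 + F2 n i.*2.+2) = 2 * \sum_(0 <= i < j) bt n i.
  rewrite big_mkord mulr_sumr.
  by apply: eq_bigr => i _; rewrite F2_pair.
case: (kpar k) => [[j ->]|[j ->]].
  rewrite (sum_evenF (fun l => F2 n l.+1)) G odd_double mul0r subr0.
  by rewrite doubleK.
rewrite (sum_oddF (fun l => F2 n l.+1)) G F2E_odd.
have -> : odd j.*2.+1 by rewrite /= odd_double.
have E : uphalf (j.*2.+1) = j.+1 by rewrite /= doubleK.
have E2 : (j.*2.+1)./2 = j by rewrite /= uphalf_double.
by rewrite E2 mul1r.
Qed.

Lemma B_rec a n : (B a.+1 n.+1)%:R = (B a n)%:R + (B a.+1 n)%:R - (cb n a)%:R :> int.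
Proof.
rewrite !B_Ssum /Ssum /= big_cat !big_map /=.
have H : \sum_(w <- W n) ((maxn (lam w) (count id w).+1 < a.+1)%N%:R * eps false (count negb w + inv10 w))
   = \sum_(w <- W n) (lam w < a.+1)%N%:R * eps false (inv10 w) - TT false n a a.
  rewrite /TT -sumrB; apply: eq_bigr => w _; rewrite /eps !mulr1.
  have := count_le_lam w; bsplit; lia.
rewrite H TT_false.
have : (n <= a + a)%N || (cb n a == 0%N) by case: (cbv n a) => [->|]; rewrite ?eqxx ?orbT //; lia.
case/orP => [Hn|/eqP ->].
  by rewrite /= Hn leqnn mul1r addrA.
by rewrite mulr0 !subr0.
Qed.


Theorem theorem4p4 (k m : nat) (hk : (1 <= k)%N) (hm : (1 <= m)%N) :
  if ~~ odd k && ~~ odd m then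
    (2 * (O k m)%:Z = (B k m)%:Z + (B k./2 (m - 2)./2)%:Z
                      - (B k./2 m./2)%:Z - (B (k - 2)./2 (m - 2)./2)%:Z)
  else
    (2 * (O k m)%:Z = (B k m)%:Z - 2 * (B k./2 (m - 1)./2)%:Z).
Proof.
rewrite -!natz twoO -B_Ssum.
case: (nat_par m) hm => [->//|[[n ->]|[n ->]]] _.
  rewrite /= odd_double andbF S_odd_m.
  have -> : ((n.*2.+1 - 1)./2 = n)%N by rewrite subn1 /= ?doubleK ?uphalf_double.
  by [].
case: k hk => [//|k] _.
rewrite S_even_m.
have Em1 : ((n.*2.+2 - 1)./2 = n)%N by rewrite subn1 /= ?doubleK ?uphalf_double.
have Em2 : ((n.*2.+2 - 2)./2 = n)%N by rewrite subn2 /= ?doubleK ?uphalf_double.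
have Em : ((n.*2.+2)./2 = n.+1)%N by rewrite /= ?doubleK ?uphalf_double.
case: (kpar k) => [[j ->]|[j ->]].
  have Ek : ((j.*2.+1)./2 = j)%N by rewrite /= ?doubleK ?uphalf_double.
  by rewrite /= odd_double /= !doubleK !uphalf_double mul0r subr0.
have Ek : ((j.*2.+2)./2 = j.+1)%N by rewrite /= ?doubleK ?uphalf_double.
have Ek2 : ((j.*2.+2 - 2)./2 = j)%N by rewrite subn2 /= ?doubleK ?uphalf_double.
have Ek3 : ((j.*2.+1)./2 = j)%N by rewrite /= ?doubleK ?uphalf_double.
have Hodd : odd j.*2.+1 by rewrite /= odd_double.
rewrite (_ : ~~ odd j.*2.+2 && ~~ odd n.*2.+2 = true); last by rewrite /= !odd_double.
rewrite Ek Ek2 Em Em2 Ek3 (B_rec j n) Hodd.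
lia.
Qed.
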